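(* Let $\mathbf{z}\sim\mathcal{N}(\mathbf{0},\mathbf{I}_{d\times d})$, $\mathbf{x}\in\mathbb{R}^d$, $y=\langle\mathbf{x},\mathbf{z}\rangle$, and let $\mathbf{D}^*=[\mathbf{d}^*_1,\dots,\mathbf{d}^*_n]\in\mathbb{R}^{d\times n}$ be column-orthogonal, with queries $q_i=\langle\mathbf{d}^*_i,\mathbf{z}\rangle$ having observed values $r_i$. Then $$f_{\mathbf{D}^*}\big(\mathbf{x},\{r_{\pi(i)}\}_{i=1}^k\big)=\sum_{i\in S}\langle\mathbf{d}^*_i,\mathbf{x}\rangle r_i,$$ where $S=\{\pi(1),\dots,\pi(k)\}$ is the index set selected by IP-OMP applied to $\mathbf{x}$ and $\mathbf{D}^*$.
   Context: Column-orthogonal means $\mathbf{A}^\top\mathbf{A}=\mathbf{I}$. For a query feature matrix $\mathbf{D}=[\mathbf{d}_1,\dots,\mathbf{d}_n]$, the IP-OMP selection $\pi:[k]\to[n]$ is defined iteratively for $t=1,\dots,k$ by $\pi(t)=\arg\max_i \frac{|\langle\Pi^\perp_{t-1}\mathbf{d}_i,\Pi^\perp_{t-1}\mathbf{x}\rangle|}{\|\Pi^\perp_{t-1}\mathbf{d}_i\|_2\|\Pi^\perp_{t-1}\mathbf{x}\|_2}$ over not-yet-selected indices, with $\Pi^\perp_{t-1}$ the orthogonal projection onto the orthogonal complement of the span of $\mathbf{d}_{\pi(1)},\dots,\mathbf{d}_{\pi(t-1)}$. $f_{\mathbf{D}}$ is the maximum likelihood estimator of $y$ given $q_{\pi(i)}=r_{\pi(i)}$,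 $i=1,\dots,k$. *)

(* Defs.v *)
From HB Require Import structures.
From mathcomp Require Import all_boot all_order all_algebra.
From mathcomp Require Import all_classical all_reals all_analysis.
Set Implicit Arguments. Unset Strict Implicit. Unset Printing Implicit Defensive.
Import Order.TTheory GRing.Theory Num.Theory.
Local Open Scope ring_scope.

Section Defs.
Variable R : realType.
Variable d n : nat.

Definition dot (u v : 'cV[R]_d) : R := (u^T *m v) 0 0.
Definition vnorm (u : 'cV[R]_d) : R := Num.sqrt (dot u u).

Definition col_orthogonal (D : 'M[R]_(d, n)) : Prop := D^T *m D = 1%:M.

Definition is_perp_proj (D : 'M[R]_(d, n)) (A : {set 'I_n}) (v w : 'cV[R]_d) : Prop :=
  (forall j, j \in A -> dot (col j D) w = 0) /\
  exists c : 'I_n -> R, v - w = \sum_(j in A) c j *: col j D.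

Definition ipomp_score (pd px : 'cV[R]_d) : R :=
  `|dot pd px| / (vnorm pd * vnorm px).

(* pi : [k] -> [n] is an IP-OMP selection for x and D: pi is injective
   (indices are never reselected) and for every t, pi t maximises the score,
   computed after projecting with Pi^perp_{t-1}, over all not-yet-selected
   indices (any tie-breaking allowed). *)
Definition ipomp_selection (k : nat) (D : 'M[R]_(d, n)) (x : 'cV[R]_d)
    (pi : 'I_k -> 'I_n) : Prop :=
  injective pi /\
  forall t : 'I_k,
    let A := [set pi s | s in [pred s : 'I_k | (s < t)%N]] in
    forall i : 'I_n, i \notin A ->
    forall px pdi pdt : 'cV[R]_d,
      is_perp_proj D A x px ->
      is_perp_proj D A (col i D) pdi ->
      is_perp_proj D A (col (pi t) D) pdt ->
      ipomp_score pdi px <= ipomp_score pdt px.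

Definition std_gauss_pdf (z : 'cV[R]_d) : R :=
  (Num.sqrt (2 * pi)) ^- d * expR (- (dot z z) / 2).

(* t is a maximum likelihood estimate of y = <x, z> given the observations
   q_i = <d_i, z> = r_i for i in S: t = <x, z0> where z0 is a most likely
   value of z ~ N(0,I) consistent with the observations. *)
Definition ml_estimate (D : 'M[R]_(d, n)) (S : {set 'I_n}) (x : 'cV[R]_d)
    (r : 'I_n -> R) (t : R) : Prop :=
  exists z0 : 'cV[R]_d,
    (forall i, i \in S -> dot (col i D) z0 = r i) /\
    dot x z0 = t /\
    forall z : 'cV[R]_d, (forall i, i \in S -> dot (col i D) z = r i) ->
      std_gauss_pdf z <= std_gauss_pdf z0.

End Defs.

(* Main.v *)
Require Import Defs.
From HB Require Import structures.
From mathcomp Require Import all_boot all_order all_algebra.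
From mathcomp Require Import all_classical all_reals all_analysis.
From mathcomp Require Import lra.
Import Order.TTheory GRing.Theory Num.Theory.
Local Open Scope ring_scope.

Lemma mul_self_ge0' (R : realType) (x : R) : 0 <= x * x.
Proof. by rewrite -expr2 sqr_ge0. Qed.

Section Helpers.
Variable R : realType.
Variable d : nat.
Implicit Types u v w : 'cV[R]_d.

Lemma dotE u v : dot u v = \sum_j u j 0 * v j 0.
Proof. rewrite /dot !mxE; apply: eq_bigr => j _; by rewrite mxE. Qed.

Lemma dotC u v : dot u v = dot v u.
Proof. rewrite !dotE; apply: eq_bigr => j _; by rewrite mulrC. Qed.

Lemma dotDr u v w : dot u (v + w) = dot u v + dot u w.
Proof. by rewrite /dot mulmxDr mxE. Qed.

Lemma dotNr u v : dot u (- v) = - dot u v.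
Proof. by rewrite /dot mulmxN mxE. Qed.

Lemma dotBr u v w : dot u (v - w) = dot u v - dot u w.
Proof. by rewrite dotDr dotNr. Qed.

Lemma dotBl u v w : dot (v - w) u = dot v u - dot w u.
Proof. by rewrite dotC dotBr (dotC u) (dotC u). Qed.

Lemma dotZr u (a : R) v : dot u (a *: v) = a * dot u v.
Proof. by rewrite /dot -scalemxAr mxE. Qed.

Lemma dot_sumr (I : finType) (P : pred I) (F : I -> 'cV[R]_d) u :
  dot u (\sum_(i | P i) F i) = \sum_(i | P i) dot u (F i).
Proof. by rewrite /dot mulmx_sumr summxE. Qed.

Lemma dot_ge0 u : 0 <= dot u u.
Proof. rewrite dotE; apply: sumr_ge0 => j _; exact: mul_self_ge0'. Qed.

Lemma dot_eq0 u : dot u u = 0 -> u = 0.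
Proof.
rewrite dotE => H.
have H0 := psumr_eq0P (fun j _ => @mul_self_ge0' R (u j 0)) H.
apply/matrixP => i j; rewrite (ord1 j) mxE.
by have /eqP := H0 i isT; rewrite mulf_eq0 orbb => /eqP.
Qed.

Lemma pdf_mono u v : (std_gauss_pdf u <= std_gauss_pdf v) = (dot v v <= dot u u).
Proof.
rewrite /std_gauss_pdf ler_pM2l; last first.
  by rewrite invr_gt0 exprn_gt0 // sqrtr_gt0 mulr_gt0 // pi_gt0.
by rewrite ler_expR ler_pM2r ?invr_gt0 // lerN2.
Qed.

End Helpers.
Arguments dotC {R d}. Arguments dotE {R d}. Arguments dotDr {R d}. Arguments dotNr {R d}.
Arguments dotBr {R d}. Arguments dotBl {R d}. Arguments dotZr {R d}. Arguments dot_sumr {R d}.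
Arguments dot_ge0 {R d}. Arguments dot_eq0 {R d}. Arguments pdf_mono {R d}.

Lemma dot_col (R : realType) (d n : nat) (D : 'M[R]_(d, n)) i j :
  col_orthogonal D -> dot (col i D) (col j D) = (i == j)%:R.
Proof.
move=> HD; have H := congr1 (fun M : 'M[R]_n => M i j) HD.
rewrite /= !mxE in H; rewrite -H dotE; apply: eq_bigr => k _; by rewrite !mxE.
Qed.

Theorem lemmaC1 (R : realType) (d n k : nat) (D : 'M[R]_(d, n))
    (x : 'cV[R]_d) (r : 'I_n -> R) (pi : 'I_k -> 'I_n) :
  col_orthogonal D ->
  ipomp_selection D x pi ->
  forall t : R,
    ml_estimate D [set pi s | s : 'I_k] x r t <->
    t = \sum_(i in [set pi s | s : 'I_k]) dot (col i D) x * r i.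
Proof.
move=> HD _ t.
set S := [set pi s | s : 'I_k].
set zs := \sum_(i in S) r i *: col i D.
have feas : forall j, j \in S -> dot (col j D) zs = r j.
  move=> j jS; rewrite dot_sumr.
  under eq_bigr do rewrite dotZr dot_col //.
  rewrite (bigD1 j) //= eqxx mulr1 big1 ?addr0 // => i /andP[_ ne].
  by rewrite eq_sym (negPf ne) mulr0.
have dzs : forall z, (forall i, i \in S -> dot (col i D) z = r i) ->
    dot zs z = \sum_(i in S) r i * r i.
  move=> z Hz; rewrite dotC dot_sumr; apply: eq_bigr => i iS.
  by rewrite dotZr dotC Hz.
have key : forall z, (forall i, i \in S -> dot (col i D) z = r i) ->
    dot z z = dot zs zs + dot (z - zs) (z - zs).
  move=> z Hz; rewrite !dotBl !dotBr (dotC z zs) (dzs z Hz) (dzs zs feas).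
  lra.
have Hx : dot x zs = \sum_(i in S) dot (col i D) x * r i.
  rewrite dot_sumr; apply: eq_bigr => i _; by rewrite dotZr dotC mulrC.
split.
- move=> [z0 [F0 [Ht Hmax]]].
  have := Hmax zs feas; rewrite pdf_mono (key z0 F0) => Hle.
  have Hw : dot (z0 - zs) (z0 - zs) = 0.
    apply/eqP; rewrite eq_le dot_ge0 andbT; lra.
  have := dot_eq0 _ Hw; move/eqP; rewrite subr_eq0 => /eqP E.
  by rewrite -Ht E Hx.
- move=> ->; exists zs; split; first exact: feas.
  split; first exact: Hx.
  move=> z Hz; rewrite pdf_mono (key z Hz) lerDl; exact: dot_ge0.
Qed.
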